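(* Let $\mathbf A=(A;\cdot,\to,\leadsto,1)$ be a pseudo-hoop and let $F\subseteq A$ be a filter that has a least element. Then $F$ is a normal filter.
   Context: A pseudo-hoop is an algebra $(A;\cdot,\to,\leadsto,1)$ of type $\langle 2,2,2,0\rangle$ such that for all $x,y,z\in A$: $x\cdot 1=x=1\cdot x$; $x\to x=1=x\leadsto x$; $(x\cdot y)\to z=x\to(y\to z)$; $(x\cdot y)\leadsto z=y\leadsto(x\leadsto z)$; and $(x\to y)\cdot x=(y\to x)\cdot y=x\cdot(x\leadsto y)=y\cdot(y\leadsto x)$. Setting $x\le y$ iff $x\to y=1$ gives a partial order with greatest element $1$. A filter is a nonempty upward closed subset closed under $\cdot$. A filter $F$ is normal if for all $x,y\in A$: $x\to y\in F$ iff $x\leadsto y\in F$. *)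

(* Defs.v *)
Set Implicit Arguments.
Unset Strict Implicit.

(* Pseudo-hoop axioms for (A; mul, imp, limp, one):
   mul = ., imp = ->, limp = ~> (leadsto). *)
Record is_pseudo_hoop (A : Type) (mul imp limp : A -> A -> A) (one : A) : Prop := {
  ph_mul_1r : forall x, mul x one = x;
  ph_mul_1l : forall x, mul one x = x;
  ph_imp_refl : forall x, imp x x = one;
  ph_limp_refl : forall x, limp x x = one;
  ph_imp_mul : forall x y z, imp (mul x y) z = imp x (imp y z);
  ph_limp_mul : forall x y z, limp (mul x y) z = limp y (limp x z);
  ph_div1 : forall x y, mul (imp x y) x = mul (imp y x) y;
  ph_div2 : forall x y, mul (imp y x) y = mul x (limp x y);
  ph_div3 : forall x y, mul x (limp x y) = mul y (limp y x)
}.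

Definition ph_le (A : Type) (imp : A -> A -> A) (one : A) (x y : A) : Prop :=
  imp x y = one.

Definition is_filter (A : Type) (mul imp : A -> A -> A) (one : A) (F : A -> Prop) : Prop :=
  (exists x, F x) /\
  (forall x y, F x -> ph_le imp one x y -> F y) /\
  (forall x y, F x -> F y -> F (mul x y)).

Definition is_normal_filter (A : Type) (mul imp limp : A -> A -> A) (one : A)
    (F : A -> Prop) : Prop :=
  is_filter mul imp one F /\ (forall x y, F (imp x y) <-> F (limp x y)).

Definition has_least (A : Type) (imp : A -> A -> A) (one : A) (F : A -> Prop) : Prop :=
  exists a, F a /\ forall x, F x -> ph_le imp one a x.

(* Main.v *)
Require Import Defs.
From Stdlib Require Import Setoid.

Theorem lemma4p5 (A : Type) (mul imp limp : A -> A -> A) (one : A)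
  (HA : is_pseudo_hoop mul imp limp one) (F : A -> Prop)
  (HF : is_filter mul imp one F) (Hleast : has_least imp one F) :
  is_normal_filter mul imp limp one F.
Proof.
  destruct HA as [m1r m1l ir lr im lm d1 d2 d3].
  destruct HF as [Hne [Hup Hmul]].
  destruct Hleast as [a [Fa Ha]].
  unfold ph_le in *.
  assert (one_imp : forall x, imp one x = x).
  { intro x.
    assert (H1 : imp x (imp one x) = one).
    { rewrite <- im, m1r. apply ir. }
    assert (H2 : imp (imp one x) x = one).
    { assert (E : mul (imp one x) one = imp one x) by apply m1r.
      rewrite <- E at 1. rewrite im. apply ir. }
    pose proof (d1 x (imp one x)) as E.
    rewrite H1, H2, !m1l in E. symmetry; exact E. }
  assert (imp_one : forall x, imp x one = one).
  { intro x. assert (E : mul (imp x one) x = x).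
    { rewrite d1, one_imp, m1r. reflexivity. }
    rewrite <- E at 1. rewrite im. apply ir. }
  assert (limp_one : forall x, limp x one = one).
  { intro x. assert (E : mul x (limp x one) = x).
    { rewrite <- d2, one_imp, m1r. reflexivity. }
    rewrite <- E at 1. rewrite lm. apply lr. }
  assert (le_limp : forall x y, imp x y = one -> limp x y = one).
  { intros x y H. assert (E : mul y (limp y x) = x).
    { rewrite <- d3, <- d2, <- d1, H, m1l. reflexivity. }
    rewrite <- E at 1. rewrite lm, lr. apply limp_one. }
  assert (limp_le : forall x y, limp x y = one -> imp x y = one).
  { intros x y H. assert (E : mul (imp y x) y = x).
    { rewrite d2, H, m1r. reflexivity. }
    rewrite <- E at 1. rewrite im, ir. apply imp_one. }
  assert (antisym : forall x y, imp x y = one -> imp y x = one -> x = y).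
  { intros x y H1 H2. pose proof (d1 x y) as E. rewrite H1, H2, !m1l in E. exact E. }
  assert (trans : forall x y z, imp x y = one -> imp y z = one -> imp x z = one).
  { intros x y z H1 H2. assert (E : mul (imp y x) y = x).
    { rewrite <- d1, H1, m1l. reflexivity. }
    rewrite <- E. rewrite im, H2. apply imp_one. }
  assert (assoc : forall x y z, mul (mul x y) z = mul x (mul y z)).
  { intros x y z.
    assert (G : forall t, imp (mul (mul x y) z) t = imp (mul x (mul y z)) t).
    { intro t. rewrite !im. reflexivity. }
    apply antisym; [rewrite G | rewrite <- G]; apply ir. }
  assert (mono_r : forall x y z, imp y z = one -> imp (mul x y) (mul x z) = one).
  { intros x y z H. apply limp_le. rewrite lm. apply le_limp.
    apply trans with z; [exact H|]. apply limp_le. rewrite <- lm. apply lr. }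
  assert (mono_l : forall x y z, imp y z = one -> imp (mul y x) (mul z x) = one).
  { intros x y z H. rewrite im.
    apply trans with z; [exact H|]. rewrite <- im. apply ir. }
  assert (aa : mul a a = a).
  { apply antisym.
    - rewrite im, ir. apply imp_one.
    - apply Ha. apply Hmul; exact Fa. }
  assert (c1 : forall x, imp (mul x a) (mul a x) = one).
  { intro x.
    assert (E : mul a (limp a (mul x a)) = mul x a).
    { rewrite <- d3, <- d2, <- d1.
      assert (L : imp (mul x a) a = one) by (rewrite im, ir; apply imp_one).
      rewrite L, m1l. reflexivity. }
    assert (E2 : mul x a = mul (mul a x) a).
    { rewrite <- E at 1. rewrite <- aa at 1. rewrite assoc, E, assoc. reflexivity. }
    rewrite E2. rewrite <- (m1r (mul a x)) at 2. apply mono_r. apply imp_one. }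
  assert (c2 : forall x, imp (mul a x) (mul x a) = one).
  { intro x.
    assert (L : imp (mul a x) a = one).
    { apply limp_le. rewrite lm, lr. apply limp_one. }
    assert (E : mul (imp a (mul a x)) a = mul a x).
    { rewrite <- d1, L, m1l. reflexivity. }
    assert (E2 : mul a x = mul a (mul x a)).
    { transitivity (mul (imp a (mul a x)) (mul a a)); [rewrite aa; symmetry; exact E|].
      rewrite <- assoc, E, assoc. reflexivity. }
    rewrite E2. rewrite <- (m1l (mul x a)) at 2. apply mono_l. apply imp_one. }
  split; [split; [exact Hne | split; [exact Hup | exact Hmul]] |].
  intros x y; split; intro H.
  - apply Hup with a; [exact Fa|].
    apply limp_le. rewrite <- lm. apply le_limp.
    apply trans with (mul a x); [apply c1|]. rewrite im. apply Ha, H.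
  - apply Hup with a; [exact Fa|].
    rewrite <- im. apply trans with (mul x a); [apply c2|].
    apply limp_le. rewrite lm. apply le_limp. apply Ha, H.
Qed.
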